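(* For every fixed positive integer $q$ there is a constant $C_q$ such that for every $k\ge q$ there exists a set of uniqueness for $(\mathcal{B}^k_q)_+$ with at most $C_q\,k^{\lfloor q/2\rfloor}$ elements; that is, there exist sets of uniqueness for $(\mathcal{B}^k_q)_+$ of size $O(k^{\lfloor q/2\rfloor})$.
   Context: Let $\mathcal{X}=\{-1,+1\}^k$. For $L\subseteq\{1,\ldots,k\}$ let $w_L(x)=\prod_{j\in L}x_j$ (with $w_\emptyset\equiv 1$). For $1\le q\le k$, $\mathcal{B}^k_q$ is the linear span of $\{w_L: |L|\le q\}$ in the space of real functions on $\mathcal{X}$, and $(\mathcal{B}^k_q)_+=\{\varphi\in\mathcal{B}^k_q:\ \varphi\ge 0\}$. A set $U\subseteq\mathcal{X}$ is a set of uniqueness for $(\mathcal{B}^k_q)_+$ if the only $\varphi\in(\mathcal{B}^k_q)_+$ vanishing on $U$ is $\varphi\equiv0$. *)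

(* Defs.v *)
From Stdlib Require Import Reals.
From mathcomp Require Import all_boot all_order all_algebra.
From mathcomp Require Import Rstruct.
Set Implicit Arguments. Unset Strict Implicit. Unset Printing Implicit Defensive.
Import Order.TTheory GRing.Theory Num.Theory.
Local Open Scope ring_scope.

(* The cube {-1,+1}^k is encoded as {ffun 'I_k -> bool}; coordinate j of
   x is x_j = +1 if x j = true and -1 if x j = false. Real numbers are
   Stdlib's R (a realType via Rstruct). *)
Definition cube (k : nat) := {ffun 'I_k -> bool}.

Definition coord (k : nat) (x : cube k) (j : 'I_k) : R :=
  if x j then 1 else -1.

Definition walsh (k : nat) (L : {set 'I_k}) (x : cube k) : R :=
  \prod_(j in L) coord x j.

Definition in_B (k q : nat) (phi : cube k -> R) : Prop :=
  exists c : {set 'I_k} -> R,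
    forall x, phi x = \sum_(L : {set 'I_k} | (#|L| <= q)%N) c L * walsh L x.

Definition uniqueness_set (k q : nat) (U : {set cube k}) : Prop :=
  forall phi : cube k -> R,
    in_B q phi -> (forall x, 0 <= phi x) ->
    (forall x, x \in U -> phi x = 0) -> forall x, phi x = 0.

(* Main.v *)
Require Import Defs.
From Stdlib Require Import Reals.
From mathcomp Require Import all_boot all_order all_algebra.
From mathcomp Require Import Rstruct.
From mathcomp Require Import zify finfield.
Import VectorInternalTheory.
Set Implicit Arguments. Unset Strict Implicit. Unset Printing Implicit Defensive.
Import Order.TTheory GRing.Theory Num.Theory.
Local Open Scope ring_scope.
Lemma F2_cases (b : 'F_2) : b = 0 \/ b = 1.
Proof. by case: b => [[|[|]]] //= Hb; [left|right]; apply/val_inj. Qed.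

Lemma F2_add_xor (b c : 'F_2) : (b + c != 0) = (b != 0) (+) (c != 0).
Proof. by case: (F2_cases b) => ->; case: (F2_cases c) => ->. Qed.

Lemma lambda_exists (F : finFieldType) (h : 2 \in [pchar F]) :
  exists lam : F -> bool, (forall x y, lam (x + y) = lam x (+) lam y) /\ exists x0, lam x0.
Proof.
pose V := pPrimeCharType h.
pose f := @VectorInternalTheory.v2r _ V.
have : f 1 != 0.
  have f0 : f 0 = 0 by rewrite /f linear0.
  apply/eqP => H. have := @VectorInternalTheory.v2r_inj _ V 1 0.
  rewrite /f in H f0; rewrite H f0 => /(_ erefl)/eqP.
  by rewrite oner_eq0.
case: (boolP [exists i, f 1 0 i != 0]).
  move/existsP => [i Hi] _.
  exists (fun x : F => f x 0 i != 0); split; last by exists 1.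
  move=> x y. have -> : f (x + y) = f x + f y := linearD f x y.
  by rewrite mxE F2_add_xor.
rewrite negb_exists => /forallP H; case/eqP; apply/matrixP => a b.
by rewrite ord1 mxE; apply/eqP; rewrite -[_ == 0]negbK H.
Qed.
Lemma powsum_nonvanish (F : fieldType) k (L : {set 'I_k}) (al : 'I_k -> F) :
  injective al -> (forall j, al j != 0) -> L != set0 ->
  ~ (forall n, (0 < n <= #|L|)%N -> \sum_(j in L) al j ^+ n = 0).
Proof.
move=> inj nz /set0Pn [j0 Lj0] H.
pose P := \prod_(j in L :\ j0) ('X - (al j)%:P).
pose Q := 'X * P.
have sP : size P = #|L :\ j0|.+1.
  rewrite /P -big_enum /= -(big_map al xpredT (fun x => 'X - x%:P)).
  by rewrite size_prod_XsubC size_map -cardE.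
have cL : #|L| = #|L :\ j0|.+1 by rewrite (cardsD1 j0 L) Lj0.
have sQ : (size Q <= #|L|.+1)%N.
  rewrite /Q mulrC; apply: (leq_trans (size_polyMleq _ _)).
  by rewrite sP size_polyX cL addn2.
have E1 : \sum_(j in L) Q.[al j] = 0.
  rewrite (eq_bigr (fun j => \sum_(n < #|L|.+1) Q`_n * al j ^+ n)); last first.
    by move=> j _; rewrite (horner_coef_wide _ sQ).
  rewrite exchange_big /= big1 // => n _.
  rewrite -mulr_sumr; case: n => [[|n]] /= Hn.
    by rewrite /Q coefXM eqxx mul0r.
  by rewrite H ?mulr0 //.
have E2 : \sum_(j in L) Q.[al j] = Q.[al j0].
  rewrite (bigD1 j0) //= big1 ?addr0 // => j /andP [Lj nj].
  rewrite /Q hornerM /P horner_prod (bigD1 j) /=; last by rewrite !inE nj Lj.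
  by rewrite hornerXsubC subrr mul0r mulr0.
move: E1; rewrite E2 /Q hornerM hornerX /P horner_prod; apply/eqP.
rewrite mulf_neq0 //; apply/prodf_neq0 => j; rewrite !inE => /andP [nj _].
rewrite hornerXsubC subr_eq0; apply/eqP => /inj E; move: nj; by rewrite E eqxx.
Qed.

Lemma powsum_char2 (F : fieldType) (h : 2 \in [pchar F]) k (L : {set 'I_k})
  (al : 'I_k -> F) N :
  (forall n, odd n -> (n <= N)%N -> \sum_(j in L) al j ^+ n = 0) ->
  forall n, (0 < n <= N)%N -> \sum_(j in L) al j ^+ n = 0.
Proof.
move=> Hodd n; elim: n {-2}n (leqnn n) => [|M IH] n Hn /andP [n0 nN].
  by move: n0; rewrite lt0n -leqn0 Hn.
case o: (odd n); first exact: Hodd.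
have Hn2 : n = (n./2).*2 by rewrite -[LHS]odd_double_half o.
have sq : forall x y : F, (x + y) ^+ 2 = x ^+ 2 + y ^+ 2.
  by move=> x y; rewrite sqrrD -mulr_natr (pcharf0 h) mulr0 addr0.
rewrite Hn2 -muln2 (eq_bigr (fun j => (al j ^+ n./2) ^+ 2)); last first.
  by move=> j _; rewrite exprM.
rewrite -(big_morph (fun x => x ^+ 2) sq (expr0n _ _)) IH ?expr0n //.
- move: Hn n0; rewrite Hn2 -addnn; lia.
- move: nN n0; rewrite Hn2 -addnn; lia.
Qed.
Lemma cube_design k (L : {set 'I_k}) : L != set0 ->
  \sum_(x : cube k) walsh L x = 0.
Proof.
case/set0Pn => j Lj.
pose f (x : {ffun 'I_k -> bool}) : {ffun 'I_k -> bool} := [ffun i => if i == j then ~~ x i else x i].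
have fE : forall x (i : 'I_k), @Defs.coord k (f x) i = if i == j then - @Defs.coord k x i else @Defs.coord k x i.
  move=> x i; rewrite /Defs.coord /f /= ffunE; case: (i == j) => //; case: (x i) => //=.
    by rewrite opprK.
have fK : involutive f.
  by move=> x; apply/ffunP => i; rewrite !ffunE; case: eqP => //= _; rewrite negbK.
have fw x : walsh L (f x) = - walsh L x.
  rewrite /walsh (bigD1 j) //= [in RHS](bigD1 j) //= -mulNr; congr (_ * _).
    by rewrite fE eqxx.
  by apply: eq_bigr => i /andP [_ nij]; rewrite fE (negbTE nij).
have E : \sum_(x : cube k) walsh L x = \sum_(x : cube k) walsh L (f x).
  exact: (reindex_inj (inv_inj fK)).
move: E; rewrite (eq_bigr _ (fun x _ => fw x)) sumrN => /eqP.
rewrite -subr_eq0 opprK -mulr2n mulrn_eq0 /= => /eqP //.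
Qed.

Lemma design_sum k q (B : finType) (v : B -> cube k) (phi : cube k -> R)
  (c : {set 'I_k} -> R) :
  (forall x, phi x = \sum_(L : {set 'I_k} | (#|L| <= q)%N) c L * walsh L x) ->
  (forall L : {set 'I_k}, (0 < #|L| <= q)%N -> \sum_b walsh L (v b) = 0) ->
  \sum_b phi (v b) = c set0 * #|B|%:R.
Proof.
move=> Hc Hv.
rewrite (eq_bigr _ (fun b _ => Hc (v b))) exchange_big /=.
rewrite (bigD1 set0) ?cards0 //= [X in _ + X]big1 ?addr0.
  rewrite -mulr_sumr; congr (_ * _).
  rewrite (eq_bigr (fun _ => 1)) ?sumr_const ?card_ord //.
  by move=> b _; rewrite /walsh big_set0.
move=> L /andP [Lq nL]; rewrite -mulr_sumr Hv ?mulr0 //.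
by rewrite Lq andbT card_gt0.
Qed.

Lemma design_unique k q (A : finType) (u : A -> cube k) (a0 : A) :
  (forall L : {set 'I_k}, (0 < #|L| <= q)%N -> \sum_a walsh L (u a) = 0) ->
  uniqueness_set q [set u a | a in A].
Proof.
move=> Hd phi [c Hc] pos zero.
have c0 : c set0 = 0.
  have := design_sum Hc Hd.
  rewrite big1; last by move=> a _; apply: zero; apply: imset_f.
  have cA : (0 < #|A|)%N by apply/card_gt0P; exists a0.
  move/eqP; rewrite eq_sym mulf_eq0 pnatr_eq0 eqn0Ngt cA.
  by rewrite orbF => /eqP.
have Hcd : forall L : {set 'I_k}, (0 < #|L| <= q)%N ->
    \sum_(x : cube k) walsh L (id x) = 0.
  by move=> L /andP [HL _]; apply: cube_design; rewrite -card_gt0.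
have : \sum_(x : cube k) phi x = 0.
  by rewrite (design_sum Hc Hcd) c0 mul0r.
move/psumr_eq0P => H x; apply: H => //.
Qed.

Definition eps (b : bool) : R := if b then -1 else 1.

Lemma eps_xor a b : eps (a (+) b) = eps a * eps b.
Proof. by case: a; case: b; rewrite /eps /= ?mulN1r ?mulr1 ?mul1r ?opprK. Qed.

Definition upt (F : finFieldType) (lam : F -> bool) k e (al : 'I_k -> F)
  (p : bool * {ffun 'I_e -> F}) : cube k :=
  [ffun j => ~~ (p.1 (+) lam (\sum_(l < e) p.2 l * al j ^+ (2 * l).+1))].

Lemma code_design q k (F : finFieldType) (h : 2 \in [pchar F]) (lam : F -> bool)
  (Hlam : forall x y, lam (x + y) = lam x (+) lam y) (x0 : F) (Hx0 : lam x0)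
  (al : 'I_k -> F) (inj : injective al) (nz : forall j, al j != 0) :
  forall L : {set 'I_k}, (0 < #|L| <= q)%N ->
  \sum_p walsh L (upt lam (e := q./2) al p) = 0.
Proof.
move=> L /andP [L0 Lq].
set e := q./2.
pose chi x := eps (lam x).
have chiD x y : chi (x + y) = chi x * chi y by rewrite /chi Hlam eps_xor.
have lam0 : lam 0 = false by have := Hlam 0 0; rewrite addr0; case: (lam 0).
have chi0 : chi 0 = 1 by rewrite /chi lam0.
pose S (l : 'I_e) := \sum_(j in L) al j ^+ (2 * l).+1.
have Hw : forall p, walsh L (upt lam al p) =
    eps p.1 ^+ #|L| * chi (\sum_(l < e) p.2 l * S l).
  move=> [s a] /=; rewrite /walsh.
  rewrite (eq_bigr (fun j => eps s * chi (\sum_(l < e) a l * al j ^+ (2 * l).+1))); last first.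
    by move=> j _; rewrite /Defs.coord /upt ffunE /= -eps_xor; case: (_ (+) _).
  rewrite big_split /= prodr_const; congr (_ * _).
  rewrite -(big_morph chi chiD chi0); congr (chi _).
  rewrite exchange_big /=; apply: eq_bigr => l _; by rewrite mulr_sumr.
rewrite (eq_bigr _ (fun p _ => Hw p)).
rewrite -(pair_big xpredT xpredT (fun s (a : {ffun 'I_e -> F}) =>
   eps s ^+ #|L| * chi (\sum_(l < e) a l * S l))) /=.
rewrite big_bool /= -!mulr_sumr -mulrDl.
case o: (odd #|L|).
  by rewrite /eps -signr_odd o expr1 expr1n addNr mul0r.
apply/eqP; rewrite mulf_eq0; apply/orP; right; apply/eqP.
have [l0 Sl0] : exists l0, S l0 != 0.
  case: (boolP [exists l, S l != 0]) => [/existsP //|].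
  rewrite negb_exists => /forallP HS; exfalso.
  apply: (powsum_nonvanish inj nz (L := L)); first by rewrite -card_gt0.
  have LE : (#|L| <= e.*2)%N.
    rewrite -[#|L|]odd_double_half o add0n leq_double; exact: half_leq.
  move=> n /andP [n0 nL].
  apply: (powsum_char2 h (N := e.*2)); last by rewrite n0 (leq_trans nL LE).
  move=> n' on' n'e.
  have l'e : (n'./2 < e)%N.
    rewrite -ltn_double; have := odd_double_half n'; rewrite on'.
    move: n'e; move: (n'./2) => t; rewrite -!muln2; lia.
  have E := HS (Ordinal l'e); rewrite negbK in E; apply: etrans (eqP E); rewrite /S /=.
  apply: eq_bigr => j _; congr (_ ^+ _).
  by rewrite -[LHS](odd_double_half n') on' -muln2 mulnC add1n.
pose g (a : {ffun 'I_e -> F}) : {ffun 'I_e -> F} :=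
  [ffun l => if l == l0 then a l + x0 / S l0 else a l].
have ginj : injective g.
  move=> a b /ffunP H; apply/ffunP => l; have := H l; rewrite !ffunE.
  by case: (l == l0) => // /addIr.
have gT a : \sum_(l < e) g a l * S l = \sum_(l < e) a l * S l + x0.
  rewrite (bigD1 l0) //= [in RHS](bigD1 l0) //= ffunE eqxx mulrDl divfK //.
  rewrite -!addrA; congr (_ + _); rewrite addrC; congr (_ + _).
  by apply: eq_bigr => l nl; rewrite ffunE (negbTE nl).
have E : \sum_(a : {ffun 'I_e -> F}) chi (\sum_(l < e) a l * S l) =
    \sum_(a : {ffun 'I_e -> F}) chi (\sum_(l < e) g a l * S l).
  exact: (reindex_inj ginj).
have E2 : \sum_(a : {ffun 'I_e -> F}) chi (\sum_(l < e) g a l * S l) =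
    - \sum_(a : {ffun 'I_e -> F}) chi (\sum_(l < e) a l * S l).
  rewrite -sumrN; apply: eq_bigr => a _.
  by rewrite gT chiD /chi Hx0 /eps mulrN1.
move: E; rewrite E2 => /eqP; rewrite -subr_eq0 opprK -mulr2n mulrn_eq0 /= => /eqP //.
Qed.

Theorem theorem3 :
  forall q : nat, (0 < q)%N ->
  exists C : nat, forall k : nat, (q <= k)%N ->
    exists U : {set cube k},
      (#|U| <= C * k ^ (q./2))%N /\ uniqueness_set q U.
Proof.
move=> q q0; exists (2 ^ (q./2).+1)%N => k qk.
have k0 : (0 < k)%N by apply: leq_trans qk.
set m := (trunc_log 2 k).+1.
have km : (k < 2 ^ m)%N by exact: trunc_log_ltn.
have mk : (2 ^ m <= 2 * k)%N by rewrite expnS leq_mul2l /= trunc_logP.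
have [F hF cardF] := @pPrimePowerField 2 m (erefl true) (ltn0Sn _).
have [lam [Hlam [x0 Hx0]]] := lambda_exists hF.
pose s := enum [pred x : F | x != 0].
have ss : size s = (2 ^ m).-1 by rewrite -cardE cardC1 cardF.
have ks : (k <= size s)%N by rewrite ss -ltnS prednK ?expn_gt0.
pose al (j : 'I_k) := nth 0 s j.
have inj : injective al.
  move=> i j /eqP; rewrite /al nth_uniq ?enum_uniq //; last 2 first.
  - exact: leq_trans (ltn_ord i) ks.
  - exact: leq_trans (ltn_ord j) ks.
  by move/eqP/val_inj.
have nz j : al j != 0.
  have : al j \in s by apply: mem_nth; apply: leq_trans (ltn_ord j) ks.
  by rewrite mem_enum.
have HU := @design_unique k q (bool * {ffun 'I_(q./2) -> F})%type (upt lam al) (true, 0) (@code_design q k F hF lam Hlam x0 Hx0 al inj nz).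
eexists; split; last exact: HU.
apply: leq_trans (leq_imset_card _ _) _.
rewrite card_prod card_bool card_ffun card_ord cardF expnS -mulnA leq_mul2l /=.
rewrite -expnMn.
case e0: (q./2) => [|e]; first by rewrite !expn0.
by rewrite leq_exp2r.
Qed.
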